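(* There is a quantity $\eta_n\to0$ as $n\to\infty$ (uniform over configurations, edges, and graphs in $\mathcal H_L$) such that for every $X\in\mathcal G_n$, every pair $e$, and every $G=(V,E)\in\mathcal H_L$, if $X(0)=X$ and $X(1)$ is obtained by one step of the Glauber dynamics, then $$\mathbb E\left[\frac{N_G(X(1),e)-N_G(X(0),e)}{n^{|V|-2}}\right]\le(1+\eta_n)\frac{2}{\binom n2}|E|(|E|-1)\Big[-r_G(X,e)^{|E|-1}+\varphi(\bar r(X))\,\bar r(X)^{|E|-2}\Big].$$
   Context: Fix an integer $s\ge 1$, graphs $G_1,\dots,G_s$ where $G_i$ has vertex set $V_i=\{1,\dots,|V_i|\}$ and edge set $E_i$, with $G_1$ the single edge on $\{1,2\}$, and an integer $L\ge\max_i|V_i|$. Fix $\beta=(\beta_1,\dots,\beta_s)$ with $\beta_1\in\mathbb R$, $\beta_i>0$ for $i\ge 2$. $\mathcal G_n$ is the set of simple graphs on $[n]$ (a graph is its edge set). For a graph $G=(V,E)$, $V=\{1,\dots,m\}$, and $X\in\mathcal G_n$: $N_G(X)$ is the number of injective $\sigma:V\to[n]$ with $\{\sigma(i),\sigma(j)\}\in X$ for all $\{i,j\}\in E$; for a pair $e\in\binom{[n]}2$, $N_G(X,e)$ is the number of injective $\sigma:V\to[n]$ such that $\{\sigma(i),\sigma(j)\}\in X\cup\{e\}$ for all $\{i,j\}\in E$ and $e=\{\sigma(i),\sigma(j)\}$ for some $\{i,j\}\in E$. Gibbs measure $p_n(X)\propto\exp(H(X))$, $H(X)=\sum_i\beta_iN_{G_i}(X)/n^{|V_i|-2}$.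 Glauber dynamics: from $X$, pick a pair $e$ uniformly among the $\binom n2$ pairs, move to $X\cup\{e\}$ with probability $e^{\partial_eH(X)}/(1+e^{\partial_eH(X)})$, where $\partial_eH(X)=H(X\cup\{e\})-H(X\setminus\{e\})$, and to $X\setminus\{e\}$ otherwise. $\Psi(p)=\sum_{i=1}^s2\beta_i|E_i|p^{|E_i|-1}$, $\varphi(p)=e^{\Psi(p)}/(1+e^{\Psi(p)})$. $\mathcal H_L$ is the set of graphs with at most $L$ vertices and at least $2$ edges. For $G=(V,E)\in\mathcal H_L$: $r_G(X,e)=\big(N_G(X,e)/(2|E|n^{|V|-2})\big)^{1/(|E|-1)}$, and $\bar r(X)=\max_{e,\,G\in\mathcal H_L}r_G(X,e)$. *)

(* Defs.v *)
From Stdlib Require Import Reals List Arith Bool.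
Import ListNotations.
Open Scope R_scope.
Local Open Scope bool_scope.

(** A (labelled, simple) graph G = (V,E) with V = {0,...,m-1}:
    a pair (m, E) where every edge (i,j) satisfies i < j < m and E has no repeats.
    (Vertices are 0-based instead of the paper's 1-based; harmless relabelling.) *)
Definition graph : Type := (nat * list (nat * nat))%type.
Definition nv (G : graph) : nat := fst G.
Definition edges (G : graph) : list (nat * nat) := snd G.

Definition is_graph (G : graph) : Prop :=
  NoDup (edges G) /\
  (forall p, In p (edges G) -> (fst p < snd p)%nat /\ (snd p < nv G)%nat).

Definition in_HL (L : nat) (G : graph) : Prop :=
  is_graph G /\ (nv G <= L)%nat /\ (2 <= length (edges G))%nat.

(** A graph on [n] = {0,...,n-1}, given by its (symmetric, loopless) adjacency. *)
Definition config : Type := nat -> nat -> bool.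
Definition is_config (n : nat) (X : config) : Prop :=
  (forall a b, X a b = X b a) /\ (forall a, X a a = false) /\
  (forall a b, X a b = true -> (a < n)%nat /\ (b < n)%nat).

(** An (unordered) pair {u,v} of [n], represented as (u,v) with u < v < n. *)
Definition is_pair (n : nat) (e : nat * nat) : Prop :=
  (fst e < snd e)%nat /\ (snd e < n)%nat.

Definition all_pairs (m : nat) : list (nat * nat) :=
  flat_map (fun j => map (fun i => (i, j)) (seq 0 j)) (seq 0 m).

Definition samepair (e : nat * nat) (a b : nat) : bool :=
  (Nat.eqb (fst e) a && Nat.eqb (snd e) b) || (Nat.eqb (fst e) b && Nat.eqb (snd e) a).

Definition addE (X : config) (e : nat * nat) : config :=
  fun a b => X a b || samepair e a b.
Definition remE (X : config) (e : nat * nat) : config :=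
  fun a b => X a b && negb (samepair e a b).

Fixpoint tuples (m n : nat) : list (list nat) :=
  match m with
  | O => [[]]
  | S m' => flat_map (fun l => map (fun a => a :: l) (seq 0 n)) (tuples m' n)
  end.

Fixpoint nodupb (l : list nat) : bool :=
  match l with
  | [] => true
  | x :: t => negb (existsb (Nat.eqb x) t) && nodupb t
  end.

(** injective maps sigma : V -> [n], sigma i = nth i l 0 *)
Definition injections (m n : nat) : list (list nat) := filter nodupb (tuples m n).

Definition NG (n : nat) (G : graph) (X : config) : nat :=
  length (filter (fun l =>
    forallb (fun p => X (nth (fst p) l 0%nat) (nth (snd p) l 0%nat)) (edges G))
    (injections (nv G) n)).

Definition NGe (n : nat) (G : graph) (X : config) (e : nat * nat) : nat :=
  length (filter (fun l =>
    forallb (fun p => X (nth (fst p) l 0%nat) (nth (snd p) l 0%nat)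
                      || samepair e (nth (fst p) l 0%nat) (nth (snd p) l 0%nat)) (edges G)
    && existsb (fun p => samepair e (nth (fst p) l 0%nat) (nth (snd p) l 0%nat)) (edges G))
    (injections (nv G) n)).

(** n^{|V|-2} with an integer exponent *)
Definition npow (n : nat) (G : graph) : R :=
  powerRZ (INR n) (Z.of_nat (nv G) - 2)%Z.

Fixpoint sumR (l : list R) : R :=
  match l with [] => 0 | x :: t => x + sumR t end.

Definition Ham (s n : nat) (Gs : nat -> graph) (beta : nat -> R) (X : config) : R :=
  sumR (map (fun i => beta i * INR (NG n (Gs i) X) / npow n (Gs i)) (seq 0 s)).

Definition padd (s n : nat) (Gs : nat -> graph) (beta : nat -> R) (X : config)
    (f : nat * nat) : R :=
  let d := Ham s n Gs beta (addE X f) - Ham s n Gs beta (remE X f) in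
  exp d / (1 + exp d).

Definition binom2R (n : nat) : R := INR n * (INR n - 1) / 2.

(** Expectation of F(X(1)) for one Glauber step started at X(0) = X *)
Definition glauberE (s n : nat) (Gs : nat -> graph) (beta : nat -> R) (X : config)
    (F : config -> R) : R :=
  / binom2R n *
  sumR (map (fun f => padd s n Gs beta X f * F (addE X f)
                      + (1 - padd s n Gs beta X f) * F (remE X f)) (all_pairs n)).

Definition Psi (s : nat) (Gs : nat -> graph) (beta : nat -> R) (p : R) : R :=
  sumR (map (fun i => 2 * beta i * INR (length (edges (Gs i)))
                        * p ^ (length (edges (Gs i)) - 1)) (seq 0 s)).
Definition phi (s : nat) (Gs : nat -> graph) (beta : nat -> R) (p : R) : R :=
  exp (Psi s Gs beta p) / (1 + exp (Psi s Gs beta p)).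

(** nonnegative k-th root of x >= 0 (with root of 0 equal to 0) *)
Definition rootR (k : nat) (x : R) : R :=
  if Req_EM_T x 0 then 0 else Rpower x (/ INR k).

Definition rG (n : nat) (G : graph) (X : config) (e : nat * nat) : R :=
  rootR (length (edges G) - 1)
    (INR (NGe n G X e) / (2 * INR (length (edges G)) * npow n G)).

Fixpoint sublists {A : Type} (l : list A) : list (list A) :=
  match l with
  | [] => [[]]
  | x :: t => sublists t ++ map (cons x) (sublists t)
  end.

Definition HL_list (L : nat) : list graph :=
  flat_map (fun m => map (fun E => (m, E))
                        (filter (fun E => Nat.leb 2 (length E)) (sublists (all_pairs m))))
           (seq 0 (S L)).

Fixpoint maxR (l : list R) : R :=
  match l with [] => 0 | x :: t => Rmax x (maxR t) end.

(** rbar(X) = max over pairs e of [n] and G in H_L of r_G(X,e) (all r_G >= 0) *)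
Definition rbar (L n : nat) (X : config) : R :=
  maxR (flat_map (fun e => map (fun G => rG n G X e) (HL_list L)) (all_pairs n)).

(* Main.v *)
Require Import Defs.
From Stdlib Require Import Reals List Arith Lia Lra Bool Permutation FunctionalExtensionality.
Import ListNotations.
Open Scope R_scope.

Definition ind (b : bool) : R := if b then 1 else 0.

Lemma ind_nonneg b : 0 <= ind b.
Proof. destruct b; simpl; lra. Qed.
Lemma ind_le1 b : ind b <= 1.
Proof. destruct b; simpl; lra. Qed.
Lemma ind_andb a b : ind (a && b) = ind a * ind b.
Proof. destruct a, b; simpl; lra. Qed.
Lemma ind_negb a : ind (negb a) = 1 - ind a.
Proof. destruct a; simpl; lra. Qed.

Lemma sumR_app l1 l2 : sumR (l1 ++ l2) = sumR l1 + sumR l2.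
Proof. induction l1; simpl; [lra|rewrite IHl1; lra]. Qed.

Lemma sumR_ext {A} (f g : A -> R) l :
  (forall x, In x l -> f x = g x) -> sumR (map f l) = sumR (map g l).
Proof.
  induction l; simpl; intros H; auto.
  rewrite H by auto. rewrite IHl; auto.
Qed.

Lemma sumR_le {A} (f g : A -> R) l :
  (forall x, In x l -> f x <= g x) -> sumR (map f l) <= sumR (map g l).
Proof.
  induction l; simpl; intros H; [lra|].
  assert (f a <= g a) by auto. assert (sumR (map f l) <= sumR (map g l)) by auto. lra.
Qed.

Lemma sumR_nonneg {A} (f : A -> R) l :
  (forall x, In x l -> 0 <= f x) -> 0 <= sumR (map f l).
Proof.
  induction l; simpl; intros H; [lra|].
  assert (0 <= f a) by auto. assert (0 <= sumR (map f l)) by auto. lra.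
Qed.

Lemma sumR_plus {A} (f g : A -> R) l :
  sumR (map (fun x => f x + g x) l) = sumR (map f l) + sumR (map g l).
Proof. induction l; simpl; [lra|rewrite IHl; lra]. Qed.

Lemma sumR_minus {A} (f g : A -> R) l :
  sumR (map (fun x => f x - g x) l) = sumR (map f l) - sumR (map g l).
Proof. induction l; simpl; [lra|rewrite IHl; lra]. Qed.

Lemma sumR_scal {A} (c : R) (f : A -> R) l :
  sumR (map (fun x => c * f x) l) = c * sumR (map f l).
Proof. induction l; simpl; [lra|rewrite IHl; lra]. Qed.

Lemma sumR_const {A} (c : R) (l : list A) :
  sumR (map (fun _ => c) l) = INR (length l) * c.
Proof.
  induction l; simpl length; simpl map; simpl sumR; [simpl; lra|].
  rewrite IHl, S_INR; lra.
Qed.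

Lemma sumR_zero {A} (l : list A) : sumR (map (fun _ => 0) l) = 0.
Proof. rewrite sumR_const; lra. Qed.

Lemma sumR_swap {A B} (g : A -> B -> R) la lb :
  sumR (map (fun a => sumR (map (fun b => g a b) lb)) la) =
  sumR (map (fun b => sumR (map (fun a => g a b) la)) lb).
Proof.
  induction la; simpl.
  - rewrite sumR_zero; auto.
  - rewrite IHla. rewrite <- sumR_plus. reflexivity.
Qed.

Lemma sumR_flat_map {A B} (h : B -> R) (f : A -> list B) l :
  sumR (map h (flat_map f l)) = sumR (map (fun a => sumR (map h (f a))) l).
Proof.
  induction l; simpl; auto. rewrite map_app, sumR_app, IHl; auto.
Qed.

Lemma sumR_single_le {A} (f : A -> R) l x :
  In x l -> (forall y, In y l -> 0 <= f y) -> f x <= sumR (map f l).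
Proof.
  induction l; simpl; intros Hx H; [contradiction|].
  destruct Hx as [<-|Hx].
  - assert (0 <= sumR (map f l)) by (apply sumR_nonneg; auto). lra.
  - assert (0 <= f a) by auto. assert (f x <= sumR (map f l)) by auto. lra.
Qed.

Lemma len_filter {A} (P : A -> bool) l :
  INR (length (filter P l)) = sumR (map (fun x => ind (P x)) l).
Proof.
  induction l; simpl; auto.
  destruct (P a); simpl length; [rewrite S_INR, IHl; simpl; lra| rewrite IHl; simpl; lra].
Qed.

Lemma sumR_filter {A} (Q : A -> bool) (h : A -> R) l :
  sumR (map h (filter Q l)) = sumR (map (fun x => ind (Q x) * h x) l).
Proof.
  induction l; simpl; auto.
  destruct (Q a); simpl; rewrite IHl; lra.
Qed.

Lemma sum_ind_zero {A} (P : A -> bool) l :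
  (forall x, In x l -> P x = false) -> sumR (map (fun x => ind (P x)) l) = 0.
Proof.
  induction l; simpl; intros H; auto. rewrite H by auto. rewrite IHl; auto. simpl; lra.
Qed.

Lemma sum_ind_le_exists {A} (P : A -> bool) l :
  NoDup l -> (forall x y, In x l -> In y l -> P x = true -> P y = true -> x = y) ->
  sumR (map (fun x => ind (P x)) l) <= ind (existsb P l).
Proof.
  induction l as [|a l IH]; simpl; intros Hnd Hex; [lra|].
  inversion Hnd; subst.
  destruct (P a) eqn:Ha; simpl.
  - rewrite sum_ind_zero; [lra|].
    intros x Hx. destruct (P x) eqn:Px; auto.
    assert (a = x) by (apply Hex; auto). subst. contradiction.
  - rewrite Rplus_0_l. apply IH; auto.
Qed.

Lemma sum_ind_le1 {A} (P : A -> bool) l :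
  NoDup l -> (forall x y, In x l -> In y l -> P x = true -> P y = true -> x = y) ->
  sumR (map (fun x => ind (P x)) l) <= 1.
Proof.
  intros. eapply Rle_trans; [apply sum_ind_le_exists; auto| apply ind_le1].
Qed.

Lemma tuples_prop m n l : In l (tuples m n) -> length l = m /\ (forall x, In x l -> (x < n)%nat).
Proof.
  revert l; induction m; simpl; intros l H.
  - destruct H as [<-|[]]; simpl; split; auto; intros x [].
  - apply in_flat_map in H as [l' [Hl' Hin]]. apply in_map_iff in Hin as [a [<- Ha]].
    apply in_seq in Ha. destruct (IHm l' Hl') as [H1 H2]. simpl; split; [lia|].
    intros x [<-|Hx]; [lia|auto].
Qed.

Lemma nodupb_NoDup l : nodupb l = true -> NoDup l.
Proof.
  induction l; simpl; intros H; [constructor|].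
  apply andb_true_iff in H as [H1 H2]. constructor; auto.
  intro Hin. apply negb_true_iff in H1.
  assert (existsb (Nat.eqb a) l = true) by (apply existsb_exists; exists a; split; auto; apply Nat.eqb_refl).
  congruence.
Qed.

Lemma inj_prop m n l : In l (injections m n) ->
  NoDup l /\ length l = m /\ (forall x, In x l -> (x < n)%nat).
Proof.
  unfold injections; intros H; apply filter_In in H as [H1 H2].
  apply tuples_prop in H1 as [? ?]. repeat split; auto. apply nodupb_NoDup; auto.
Qed.

Lemma all_pairs_In m f : In f (all_pairs m) <-> (fst f < snd f < m)%nat.
Proof.
  unfold all_pairs. rewrite in_flat_map. split.
  - intros [j [Hj Hf]]. apply in_map_iff in Hf as [i [<- Hi]].
    apply in_seq in Hj. apply in_seq in Hi. simpl; lia.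
  - destruct f as [i j]; simpl; intros H. exists j; split; [apply in_seq; lia|].
    apply in_map_iff. exists i; split; auto; apply in_seq; lia.
Qed.

Lemma all_pairs_NoDup m : NoDup (all_pairs m).
Proof.
  induction m; [constructor|]. unfold all_pairs in *.
  rewrite seq_S, flat_map_app. simpl. rewrite app_nil_r. apply NoDup_app; auto.
  - apply FinFun.Injective_map_NoDup; [intros x y E; inversion E; auto| apply seq_NoDup].
  - intros a Ha Hb. apply in_map_iff in Hb as [i [<- Hi]].
    apply in_flat_map in Ha as [j [Hj Hf]]. apply in_map_iff in Hf as [i' [E Hi']].
    inversion E. apply in_seq in Hj. lia.
Qed.


Lemma sublists_perm {A} (l E : list A) :
  NoDup E -> incl E l -> exists s, In s (sublists l) /\ Permutation s E.
Proof.
  revert E; induction l as [|x t IH]; simpl; intros E Hnd Hinc.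
  - exists []; split; auto. destruct E as [|a E]; [auto|]. exfalso; apply (Hinc a); simpl; auto.
  - destruct (Classical_Prop.classic (In x E)) as [Hx|Hx].
    + apply in_split in Hx as [E1 [E2 ->]].
      apply NoDup_remove in Hnd as [Hnd' Hni].
      destruct (IH (E1 ++ E2)) as [s [Hs Hp]]; auto.
      { intros y Hy. assert (In y (x :: t)) by (apply Hinc; apply in_app_or in Hy; apply in_or_app; simpl; tauto).
        destruct H as [<-|H]; auto; contradiction. }
      exists (x :: s); split.
      * apply in_or_app; right; apply in_map; auto.
      * rewrite <- Permutation_middle. constructor; auto.
    + destruct (IH E) as [s [Hs Hp]]; auto.
      { intros y Hy. destruct (Hinc y Hy) as [<-|H]; auto; contradiction. }
      exists s; split; auto. apply in_or_app; auto.
Qed.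

Definition pdec : forall x y : nat * nat, {x = y} + {x <> y}.
Proof. decide equality; apply Nat.eq_dec. Defined.

Lemma remove_len b E : NoDup E -> In b E -> length (remove pdec b E) = (length E - 1)%nat.
Proof.
  intros Hnd Hb. apply in_split in Hb as [E1 [E2 ->]].
  apply NoDup_remove in Hnd as [_ Hni].
  rewrite remove_app. simpl. destruct (pdec b b); [|congruence].
  rewrite !notin_remove; [| intro; apply Hni; apply in_or_app; auto| intro; apply Hni; apply in_or_app; auto].
  rewrite !length_app; simpl; lia.
Qed.

Definition QX (E : list (nat*nat)) (Y : config) (e : nat*nat) (l : list nat) : bool :=
  forallb (fun p => Y (nth (fst p) l 0%nat) (nth (snd p) l 0%nat)
                    || samepair e (nth (fst p) l 0%nat) (nth (snd p) l 0%nat)) E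
  && existsb (fun p => samepair e (nth (fst p) l 0%nat) (nth (snd p) l 0%nat)) E.

Lemma NGe_QX n G Y e : NGe n G Y e = length (filter (QX (edges G) Y e) (injections (nv G) n)).
Proof. reflexivity. Qed.

Definition QN (E : list (nat*nat)) (Y : config) (l : list nat) : bool :=
  forallb (fun p => Y (nth (fst p) l 0%nat) (nth (snd p) l 0%nat)) E.

Lemma NG_QN n G Y : NG n G Y = length (filter (QN (edges G) Y) (injections (nv G) n)).
Proof. reflexivity. Qed.

Definition sp (g : nat*nat) (l : list nat) (p : nat*nat) : bool :=
  samepair g (nth (fst p) l 0%nat) (nth (snd p) l 0%nat).

Definition Rpred E X e f l : bool :=
  QX E (addE X f) e l && existsb (fun p => sp f l p && negb (sp e l p)) E.

Lemma fa_helper {A} (x a b : A -> bool) E :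
  forallb (fun p => x p && negb (a p) || b p) E =
  forallb (fun p => x p || a p || b p) E && negb (existsb (fun p => a p && negb (b p)) E).
Proof.
  induction E as [|h E IH]; simpl; auto. rewrite IH.
  destruct (x h), (a h), (b h); simpl;
  destruct (forallb (fun p => x p || a p || b p) E), (existsb (fun p => a p && negb (b p)) E); reflexivity.
Qed.

Lemma fa_helper2 {A} (x a : A -> bool) E :
  forallb (fun p => x p && negb (a p)) E =
  forallb (fun p => x p || a p) E && negb (existsb a E).
Proof.
  induction E as [|h E IH]; simpl; auto. rewrite IH.
  destruct (x h), (a h); simpl;
  destruct (forallb (fun p => x p || a p) E), (existsb a E); reflexivity.
Qed.

Lemma QX_rem E X e f l :
  QX E (remE X f) e l = QX E (addE X f) e l && negb (existsb (fun p => sp f l p && negb (sp e l p)) E).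
Proof.
  unfold QX, addE, remE, sp.
  rewrite (fa_helper (fun p => X (nth (fst p) l 0%nat) (nth (snd p) l 0%nat))
                     (fun p => samepair f (nth (fst p) l 0%nat) (nth (snd p) l 0%nat))
                     (fun p => samepair e (nth (fst p) l 0%nat) (nth (snd p) l 0%nat))).
  destruct (forallb _ E), (existsb _ E), (existsb _ E); reflexivity.
Qed.

Lemma ind_split_QX E X e f l :
  ind (QX E (addE X f) e l) = ind (QX E (remE X f) e l) + ind (Rpred E X e f l).
Proof.
  rewrite QX_rem; unfold Rpred.
  destruct (QX _ _ _ _), (existsb _ _); simpl; lra.
Qed.

Lemma ind_split_QN E X f l :
  ind (QN E (addE X f) l) = ind (QN E (remE X f) l) + ind (QX E X f l).
Proof.
  unfold QN, QX, addE, remE.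
  rewrite (fa_helper2 (fun p => X (nth (fst p) l 0%nat) (nth (snd p) l 0%nat))
                      (fun p => samepair f (nth (fst p) l 0%nat) (nth (snd p) l 0%nat))).
  destruct (forallb _ E), (existsb _ E); simpl; lra.
Qed.

Lemma NGe_split n G X e f :
  INR (NGe n G (addE X f) e) = INR (NGe n G (remE X f) e)
    + INR (length (filter (Rpred (edges G) X e f) (injections (nv G) n))).
Proof.
  rewrite !NGe_QX, !len_filter, <- sumR_plus. apply sumR_ext; intros; apply ind_split_QX.
Qed.

Lemma NG_split n G X f :
  INR (NG n G (addE X f)) = INR (NG n G (remE X f)) + INR (NGe n G X f).
Proof.
  rewrite !NG_QN, NGe_QX, !len_filter, <- sumR_plus. apply sumR_ext; intros; apply ind_split_QN.
Qed.

Lemma samepair_true f a b : samepair f a b = true ->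
  (fst f = a /\ snd f = b) \/ (fst f = b /\ snd f = a).
Proof.
  unfold samepair; intros H. apply orb_true_iff in H as [H|H]; apply andb_true_iff in H as [H1 H2];
  apply Nat.eqb_eq in H1; apply Nat.eqb_eq in H2; auto.
Qed.

Lemma addE_id n X f : is_config n X -> X (fst f) (snd f) = true -> addE X f = X.
Proof.
  intros [Hsym _] Hf. apply functional_extensionality; intro a.
  apply functional_extensionality; intro b. unfold addE.
  destruct (samepair f a b) eqn:Hs; [|apply orb_false_r].
  apply samepair_true in Hs as [[<- <-]|[<- <-]]; [rewrite Hf|rewrite Hsym, Hf]; auto.
Qed.

Lemma remE_id n X f : is_config n X -> X (fst f) (snd f) = false -> remE X f = X.
Proof.
  intros [Hsym _] Hf. apply functional_extensionality; intro a.
  apply functional_extensionality; intro b. unfold remE.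
  destruct (samepair f a b) eqn:Hs; [|simpl; apply andb_true_r].
  apply samepair_true in Hs as [[<- <-]|[<- <-]]; [rewrite Hf|rewrite Hsym, Hf]; auto.
Qed.

Lemma sp_excl g l E p b : NoDup l ->
  (forall q, In q E -> (fst q < snd q < length l)%nat) -> In p E -> In b E ->
  sp g l p = true -> sp g l b = true -> p = b.
Proof.
  intros Hnd HE Hp Hb H1 H2. pose proof (HE p Hp) as Hp'; pose proof (HE b Hb) as Hb'.
  unfold sp in *. apply samepair_true in H1, H2.
  rewrite NoDup_nth with (d:=0%nat) in Hnd.
  destruct p as [p1 p2], b as [b1 b2]; simpl in *.
  destruct H1 as [[A1 A2]|[A1 A2]], H2 as [[B1 B2]|[B1 B2]].
  - f_equal; apply Hnd; try lia; congruence.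
  - exfalso. assert (p1 = b2) by (apply Hnd; [lia|lia|congruence]).
    assert (p2 = b1) by (apply Hnd; [lia|lia|congruence]). lia.
  - exfalso. assert (p1 = b2) by (apply Hnd; [lia|lia|congruence]).
    assert (p2 = b1) by (apply Hnd; [lia|lia|congruence]). lia.
  - f_equal; apply Hnd; try lia; congruence.
Qed.

Lemma graph_inj_E n G l : is_graph G -> In l (injections (nv G) n) ->
  NoDup l /\ (forall q, In q (edges G) -> (fst q < snd q < length l)%nat).
Proof.
  intros [_ HG] Hl. apply inj_prop in Hl as [Hnd [Hlen _]]. split; auto.
  intros q Hq. rewrite Hlen. apply HG; auto.
Qed.

Lemma sum_AP_le1 n x y :
  sumR (map (fun f => ind (samepair f x y)) (all_pairs n)) <= 1.
Proof.
  apply sum_ind_le1; [apply all_pairs_NoDup|].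
  intros f g Hf Hg H1 H2. apply all_pairs_In in Hf, Hg.
  apply samepair_true in H1, H2. destruct f as [f1 f2], g as [g1 g2]; simpl in *.
  f_equal; lia.
Qed.

Lemma sum_AP_eq1 n x y : x <> y -> (x < n)%nat -> (y < n)%nat ->
  sumR (map (fun f => ind (samepair f x y)) (all_pairs n)) = 1.
Proof.
  intros Hxy Hx Hy. apply Rle_antisym; [apply sum_AP_le1|].
  set (f0 := if Nat.ltb x y then (x, y) else (y, x)).
  assert (Hf0 : In f0 (all_pairs n)).
  { apply all_pairs_In. unfold f0. destruct (Nat.ltb x y) eqn:E;
    [apply Nat.ltb_lt in E|apply Nat.ltb_ge in E]; simpl; lia. }
  assert (Hs : samepair f0 x y = true).
  { unfold f0, samepair. destruct (Nat.ltb x y); simpl; rewrite !Nat.eqb_refl; simpl;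
    [|rewrite orb_true_r]; auto. }
  eapply Rle_trans; [|apply (sumR_single_le _ _ f0 Hf0)].
  - cbv beta; rewrite Hs; simpl; lra.
  - intros; apply ind_nonneg.
Qed.

Lemma QX_mono E X e f l : QX E X e l = true -> QX E (addE X f) e l = true.
Proof.
  unfold QX, addE; intros H. apply andb_true_iff in H as [H1 H2].
  apply andb_true_iff; split; auto.
  rewrite forallb_forall in *. intros q Hq. specialize (H1 q Hq).
  destruct (X _ _), (samepair e _ _), (samepair f _ _); simpl in *; auto.
Qed.

Lemma perl_upper n G X e l : is_graph G -> In l (injections (nv G) n) ->
  sumR (map (fun f => ind (Rpred (edges G) X e f l)) (all_pairs n)) <=
  sumR (map (fun b => ind (QX (remove pdec b (edges G)) X e l)) (edges G)).
Proof.
  intros HG Hl. destruct (graph_inj_E n G l HG Hl) as [Hnd HE].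
  set (E := edges G) in *.
  apply Rle_trans with (sumR (map (fun f => sumR (map (fun b =>
      ind (sp f l b) * ind (QX (remove pdec b E) X e l)) E)) (all_pairs n))).
  - apply sumR_le; intros f Hf. destruct (Rpred E X e f l) eqn:HR;
      [|simpl; apply sumR_nonneg; intros; apply Rmult_le_pos; apply ind_nonneg].
    unfold Rpred in HR. apply andb_true_iff in HR as [HQ Hex].
    apply existsb_exists in Hex as [b [Hb Hbb]]. apply andb_true_iff in Hbb as [Hfb Heb].
    apply negb_true_iff in Heb.
    assert (HQb : QX (remove pdec b E) X e l = true).
    { unfold QX in HQ |- *. apply andb_true_iff in HQ as [HQ1 HQ2]. apply andb_true_iff; split.
      - apply forallb_forall; intros q Hq. apply in_remove in Hq as [Hq Hqb].
        rewrite forallb_forall in HQ1. specialize (HQ1 q Hq). unfold addE in HQ1.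
        destruct (samepair f (nth (fst q) l 0%nat) (nth (snd q) l 0%nat)) eqn:Hfq.
        + exfalso; apply Hqb. eapply sp_excl; eauto.
        + rewrite orb_false_r in HQ1; auto.
      - apply existsb_exists in HQ2 as [q [Hq Hqe]]. apply existsb_exists; exists q; split; auto.
        apply in_in_remove; auto. intro; subst. unfold sp in Heb; congruence. }
    eapply Rle_trans; [|apply (sumR_single_le _ _ b Hb)].
    + cbv beta; rewrite Hfb, HQb; simpl; lra.
    + intros; apply Rmult_le_pos; apply ind_nonneg.
  - rewrite sumR_swap. apply sumR_le; intros b Hb.
    rewrite (sumR_ext _ (fun f => ind (QX (remove pdec b E) X e l) *
        ind (samepair f (nth (fst b) l 0%nat) (nth (snd b) l 0%nat))))
      by (intros; unfold sp; lra).
    rewrite sumR_scal.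
    pose proof (sum_AP_le1 n (nth (fst b) l 0%nat) (nth (snd b) l 0%nat)).
    pose proof (ind_nonneg (QX (remove pdec b E) X e l)). nra.
Qed.

Lemma perl_lower n G X e l : is_graph G -> In l (injections (nv G) n) -> is_config n X ->
  QX (edges G) X e l = true ->
  INR (length (edges G)) - 1 <=
  sumR (map (fun f => ind (X (fst f) (snd f) && Rpred (edges G) X e f l)) (all_pairs n)).
Proof.
  intros HG Hl HX HQ. destruct (graph_inj_E n G l HG Hl) as [Hnd HE].
  pose proof (inj_prop _ _ _ Hl) as [_ [_ Hlt]].
  destruct HG as [HndE _].
  set (E := edges G) in *.
  apply Rle_trans with (sumR (map (fun f => sumR (map (fun p =>
      ind (sp f l p && negb (sp e l p))) E)) (all_pairs n))).
  2:{ apply sumR_le; intros f Hf.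
      eapply Rle_trans; [apply sum_ind_le_exists; auto|].
      { intros p q Hp Hq H1 H2. apply andb_true_iff in H1 as [H1 _].
        apply andb_true_iff in H2 as [H2 _]. eapply sp_excl; eauto. }
      destruct (existsb _ E) eqn:Hex; [|simpl; apply ind_nonneg].
      apply existsb_exists in Hex as [p [Hp Hpp]].
      apply andb_true_iff in Hpp as [Hfp Hep]. apply negb_true_iff in Hep.
      assert (HXp : X (nth (fst p) l 0%nat) (nth (snd p) l 0%nat) = true).
      { unfold QX in HQ. apply andb_true_iff in HQ as [HQ1 _].
        rewrite forallb_forall in HQ1. specialize (HQ1 p Hp). unfold sp in Hep.
        rewrite Hep, orb_false_r in HQ1; auto. }
      assert (HXf : X (fst f) (snd f) = true).
      { unfold sp in Hfp. apply samepair_true in Hfp as [[-> ->]|[-> ->]]; auto.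
        destruct HX as [Hsym _]; rewrite Hsym; auto. }
      assert (HRf : Rpred E X e f l = true).
      { unfold Rpred. rewrite QX_mono by auto. simpl. apply existsb_exists.
        exists p; split; auto. rewrite Hfp, Hep; auto. }
      rewrite HXf, HRf; simpl; lra. }
  rewrite sumR_swap.
  rewrite (sumR_ext _ (fun p => ind (negb (sp e l p)) *
        sumR (map (fun f => ind (samepair f (nth (fst p) l 0%nat) (nth (snd p) l 0%nat))) (all_pairs n)))).
  2:{ intros p Hp. rewrite <- sumR_scal. apply sumR_ext; intros f Hf.
      rewrite ind_andb; unfold sp; lra. }
  rewrite (sumR_ext _ (fun p => 1 - ind (sp e l p))).
  2:{ intros p Hp. rewrite sum_AP_eq1, ind_negb; [lra| | |].
      - pose proof (HE p Hp). rewrite NoDup_nth with (d:=0%nat) in Hnd.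
        intro Heq. apply Hnd in Heq; lia.
      - apply Hlt, nth_In. pose proof (HE p Hp); lia.
      - apply Hlt, nth_In. pose proof (HE p Hp); lia. }
  rewrite sumR_minus, sumR_const.
  assert (sumR (map (fun p => ind (sp e l p)) E) <= 1).
  { apply sum_ind_le1; auto. intros; eapply sp_excl; eauto. }
  lra.
Qed.

Lemma sumR_tuples_S m n (h : list nat -> R) :
  sumR (map h (tuples (S m) n)) =
  sumR (map (fun l => sumR (map (fun a => h (a :: l)) (seq 0 n))) (tuples m n)).
Proof.
  simpl tuples. rewrite sumR_flat_map. apply sumR_ext; intros. rewrite map_map; auto.
Qed.

Lemma count_all m n : sumR (map (fun _ => 1) (tuples m n)) = INR n ^ m.
Proof.
  induction m; [simpl; lra|].
  rewrite sumR_tuples_S. rewrite (sumR_ext _ (fun _ => INR n * 1)).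
  - rewrite sumR_scal, IHm; simpl; lra.
  - intros; rewrite sumR_const, length_seq; lra.
Qed.

Lemma sum_seq_eqb n a : (a < n)%nat ->
  sumR (map (fun x => ind (Nat.eqb x a)) (seq 0 n)) = 1.
Proof.
  intros Ha. apply Rle_antisym.
  - apply sum_ind_le1; [apply seq_NoDup|]. intros x y _ _ H1 H2.
    apply Nat.eqb_eq in H1, H2; congruence.
  - assert (Hin : In a (seq 0 n)) by (apply in_seq; lia).
    eapply Rle_trans; [|apply (sumR_single_le _ _ a Hin)].
    + cbv beta; rewrite Nat.eqb_refl; simpl; lra.
    + intros; apply ind_nonneg.
Qed.

Lemma count1 n m p a : (p < m)%nat -> (a < n)%nat ->
  sumR (map (fun l => ind (Nat.eqb (nth p l 0%nat) a)) (tuples m n)) = INR n ^ (m - 1).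
Proof.
  revert p; induction m; intros p Hp Ha; [lia|].
  rewrite sumR_tuples_S. destruct p as [|p].
  - rewrite (sumR_ext _ (fun _ => 1)).
    + rewrite count_all. replace (S m - 1)%nat with m by lia; auto.
    + intros l _. simpl nth. apply sum_seq_eqb; auto.
  - rewrite (sumR_ext _ (fun l => INR n * ind (Nat.eqb (nth p l 0%nat) a))).
    + rewrite sumR_scal, IHm by lia. replace (S m - 1)%nat with (S (m - 1)) by lia. simpl; lra.
    + intros l _. simpl nth. rewrite sumR_const, length_seq; lra.
Qed.

Lemma count2 n m p1 p2 a b : p1 <> p2 -> (p1 < m)%nat -> (p2 < m)%nat -> (a < n)%nat -> (b < n)%nat ->
  sumR (map (fun l => ind (Nat.eqb (nth p1 l 0%nat) a && Nat.eqb (nth p2 l 0%nat) b)) (tuples m n))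
  = INR n ^ (m - 2).
Proof.
  revert p1 p2; induction m; intros p1 p2 Hne H1 H2 Ha Hb; [lia|].
  rewrite sumR_tuples_S. destruct p1 as [|q1], p2 as [|q2]; [lia| | |].
  - rewrite (sumR_ext _ (fun l => ind (Nat.eqb (nth q2 l 0%nat) b))).
    + rewrite count1 by lia. f_equal; lia.
    + intros l _. simpl nth.
      rewrite (sumR_ext _ (fun x => ind (Nat.eqb (nth q2 l 0%nat) b) * ind (Nat.eqb x a)))
        by (intros; rewrite ind_andb; lra).
      rewrite sumR_scal, sum_seq_eqb; auto; lra.
  - rewrite (sumR_ext _ (fun l => ind (Nat.eqb (nth q1 l 0%nat) a))).
    + rewrite count1 by lia. f_equal; lia.
    + intros l _. simpl nth.
      rewrite (sumR_ext _ (fun x => ind (Nat.eqb (nth q1 l 0%nat) a) * ind (Nat.eqb x b)))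
        by (intros; rewrite ind_andb; lra).
      rewrite sumR_scal, sum_seq_eqb; auto; lra.
  - rewrite (sumR_ext _ (fun l => INR n *
        ind (Nat.eqb (nth q1 l 0%nat) a && Nat.eqb (nth q2 l 0%nat) b))).
    + rewrite sumR_scal, IHm by lia. replace (S m - 2)%nat with (S (m - 2)) by lia. simpl; lra.
    + intros l _. simpl nth. rewrite sumR_const, length_seq; lra.
Qed.

Lemma ind_orb_le a b : ind (a || b) <= ind a + ind b.
Proof. destruct a, b; simpl; lra. Qed.

Lemma count_sp n m g q1 q2 : (q1 < q2 < m)%nat -> (fst g < n)%nat -> (snd g < n)%nat ->
  sumR (map (fun l => ind (sp g l (q1, q2))) (tuples m n)) <= 2 * INR n ^ (m - 2).
Proof.
  intros Hq Hg1 Hg2.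
  apply Rle_trans with (sumR (map (fun l =>
      ind (Nat.eqb (nth q1 l 0%nat) (fst g) && Nat.eqb (nth q2 l 0%nat) (snd g))
    + ind (Nat.eqb (nth q1 l 0%nat) (snd g) && Nat.eqb (nth q2 l 0%nat) (fst g))) (tuples m n))).
  - apply sumR_le; intros l _. unfold sp, samepair; simpl.
    rewrite (Nat.eqb_sym (fst g) (nth q1 l 0%nat)), (Nat.eqb_sym (snd g) (nth q2 l 0%nat)),
      (Nat.eqb_sym (fst g) (nth q2 l 0%nat)), (Nat.eqb_sym (snd g) (nth q1 l 0%nat)).
    eapply Rle_trans; [apply ind_orb_le|].
    destruct (Nat.eqb (nth q1 l 0%nat) (fst g)), (Nat.eqb (nth q2 l 0%nat) (snd g)),
      (Nat.eqb (nth q1 l 0%nat) (snd g)), (Nat.eqb (nth q2 l 0%nat) (fst g)); simpl; lra.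
  - rewrite sumR_plus, !count2 by lia. lra.
Qed.

Lemma sum_inj_le m n (h : list nat -> R) : (forall l, 0 <= h l) ->
  sumR (map h (injections m n)) <= sumR (map h (tuples m n)).
Proof.
  intros Hh. unfold injections. rewrite sumR_filter. apply sumR_le; intros l _.
  pose proof (Hh l). destruct (nodupb l); simpl; lra.
Qed.

Lemma npow_pos n G : (0 < n)%nat -> 0 < npow n G.
Proof. intros; unfold npow; apply powerRZ_lt; apply lt_0_INR; auto. Qed.

Lemma npow_nat n G : (2 <= nv G)%nat -> npow n G = INR n ^ (nv G - 2).
Proof.
  intros H. unfold npow. rewrite pow_powerRZ. f_equal. lia.
Qed.

Lemma one_edge n G Y g q : is_graph G -> edges G = [q] -> is_pair n g ->
  INR (NGe n G Y g) <= 2 * INR n ^ (nv G - 2).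
Proof.
  intros [_ HG] HE [Hg1 Hg2].
  assert (Hq : (fst q < snd q < nv G)%nat) by (apply HG; rewrite HE; simpl; auto).
  rewrite NGe_QX, len_filter, HE.
  apply Rle_trans with (sumR (map (fun l => ind (sp g l q)) (injections (nv G) n))).
  - apply sumR_le; intros l _. unfold QX, sp; simpl.
    destruct (Y _ _), (samepair g _ _); simpl; lra.
  - eapply Rle_trans; [apply sum_inj_le; intros; apply ind_nonneg|].
    destruct q as [q1 q2]. apply count_sp; simpl in *; lia.
Qed.

Lemma G0_count n X f : is_pair n f ->
  INR (NGe n (2%nat, [(0%nat, 1%nat)]) X f) = 2.
Proof.
  intros [Hf1 Hf2]. rewrite NGe_QX, len_filter. simpl edges; simpl nv.
  unfold injections. rewrite sumR_filter.
  rewrite (sumR_ext _ (fun l => ind (Nat.eqb (nth 0 l 0%nat) (fst f) && Nat.eqb (nth 1 l 0%nat) (snd f))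
                           + ind (Nat.eqb (nth 0 l 0%nat) (snd f) && Nat.eqb (nth 1 l 0%nat) (fst f)))).
  - rewrite sumR_plus, !count2 by lia. simpl; lra.
  - intros l Hl. apply tuples_prop in Hl as [Hlen _].
    destruct l as [|x [|y [|z l]]]; simpl in Hlen; try lia.
    unfold QX, samepair; simpl.
    destruct f as [a b]; simpl in *.
    destruct (Nat.eqb_spec x y), (Nat.eqb_spec a x), (Nat.eqb_spec b y), (Nat.eqb_spec a y),
      (Nat.eqb_spec b x), (Nat.eqb_spec x a), (Nat.eqb_spec y b), (Nat.eqb_spec x b),
      (Nat.eqb_spec y a); subst; try lia; destruct (X _ _); simpl; lra.
Qed.

Lemma rootR_pow k x : (1 <= k)%nat -> 0 <= x -> rootR k x ^ k = x.
Proof.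
  intros Hk Hx. unfold rootR. destruct (Req_EM_T x 0) as [->|Hne].
  - apply pow_i; lia.
  - assert (Hxp : 0 < x) by lra.
    assert (HkR : INR k <> 0) by (apply not_0_INR; lia).
    rewrite <- Rpower_pow by (unfold Rpower; apply exp_pos).
    rewrite Rpower_mult, Rinv_l by auto. apply Rpower_1; auto.
Qed.

Lemma rootR_nonneg k x : 0 <= rootR k x.
Proof. unfold rootR. destruct (Req_EM_T x 0); [lra|]. unfold Rpower; left; apply exp_pos. Qed.

Lemma rG_nonneg n G X e : 0 <= rG n G X e.
Proof. apply rootR_nonneg. Qed.

Lemma HL_eq L n G Y e : in_HL L G -> (0 < n)%nat ->
  INR (NGe n G Y e) = 2 * INR (length (edges G)) * npow n G * rG n G Y e ^ (length (edges G) - 1).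
Proof.
  intros [_ [_ Hk]] Hn. unfold rG. pose proof (npow_pos n G Hn).
  rewrite rootR_pow; [|lia|].
  2:{ apply Rmult_le_pos; [apply pos_INR|left; apply Rinv_0_lt_compat].
      apply Rmult_lt_0_compat; [apply Rmult_lt_0_compat; [lra|apply lt_0_INR; lia]|auto]. }
  pose proof (npow_pos n G Hn). assert (INR (length (edges G)) <> 0) by (apply not_0_INR; lia).
  field; split; lra.
Qed.

Lemma forallb_perm {A} (f : A -> bool) E E' : Permutation E E' -> forallb f E = forallb f E'.
Proof.
  induction 1; simpl; auto; try congruence.
  destruct (f x), (f y); auto.
Qed.

Lemma existsb_perm {A} (f : A -> bool) E E' : Permutation E E' -> existsb f E = existsb f E'.
Proof.
  induction 1; simpl; auto; try congruence.
  destruct (f x), (f y); auto.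
Qed.

Lemma NGe_perm n m E E' Y e : Permutation E E' -> NGe n (m, E) Y e = NGe n (m, E') Y e.
Proof.
  intros Hp. unfold NGe; simpl. f_equal. apply filter_ext; intros l.
  rewrite (forallb_perm _ _ _ Hp), (existsb_perm _ _ _ Hp); auto.
Qed.

Lemma maxR_ge x l : In x l -> x <= maxR l.
Proof.
  induction l; simpl; intros H; [contradiction|].
  destruct H as [<-|H]; [apply Rmax_l|]. eapply Rle_trans; [apply IHl; auto|apply Rmax_r].
Qed.

Lemma maxR_nonneg l : 0 <= maxR l.
Proof. induction l; simpl; [lra|]. eapply Rle_trans; [apply IHl|apply Rmax_r]. Qed.

Lemma rbar_nonneg L n X : 0 <= rbar L n X.
Proof. apply maxR_nonneg. Qed.

Lemma rG_le_rbar L n G X e : in_HL L G -> In e (all_pairs n) -> rG n G X e <= rbar L n X.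
Proof.
  destruct G as [m E]. intros [[Hnd HE] [HL H2]] He. simpl in *. unfold nv, edges in *; simpl in *.
  destruct (sublists_perm (all_pairs m) E Hnd) as [s [Hs Hp]].
  { intros p Hpin. apply all_pairs_In. apply HE; auto. }
  assert (Heq : rG n (m, s) X e = rG n (m, E) X e).
  { unfold rG, npow; simpl. rewrite (NGe_perm n m s E X e Hp), (Permutation_length Hp). auto. }
  rewrite <- Heq. apply maxR_ge. apply in_flat_map. exists e; split; auto.
  apply (in_map (fun G => rG n G X e)). unfold HL_list. apply in_flat_map. exists m; split; [apply in_seq; lia|].
  apply in_map. apply filter_In; split; auto. apply Nat.leb_le. rewrite (Permutation_length Hp); auto.
Qed.

Lemma logi_mono a b : a <= b -> exp a / (1 + exp a) <= exp b / (1 + exp b).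
Proof.
  intros H. assert (Hab : exp a <= exp b).
  { destruct (Rle_lt_or_eq_dec a b H) as [Hl| ->]; [left; apply exp_increasing; auto|lra]. }
  pose proof (exp_pos a). pose proof (exp_pos b).
  replace (exp a / (1 + exp a)) with (1 - / (1 + exp a)) by (field; lra).
  replace (exp b / (1 + exp b)) with (1 - / (1 + exp b)) by (field; lra).
  assert (/ (1 + exp b) <= / (1 + exp a)) by (apply Rinv_le_contravar; lra). lra.
Qed.

Lemma Ham_diff s n Gs beta X f :
  Ham s n Gs beta (addE X f) - Ham s n Gs beta (remE X f) =
  sumR (map (fun i => beta i * INR (NGe n (Gs i) X f) / npow n (Gs i)) (seq 0 s)).
Proof.
  unfold Ham. rewrite <- sumR_minus. apply sumR_ext; intros.
  rewrite NG_split. unfold Rdiv; ring.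
Qed.

Lemma NGe_nil n G Y e : edges G = [] -> NGe n G Y e = 0%nat.
Proof.
  intros H. unfold NGe. rewrite H. simpl.
  induction (injections (nv G) n); simpl; auto.
Qed.

Lemma term_bound s L n Gs beta X f i :
  (forall i, (i < s)%nat -> is_graph (Gs i)) ->
  Gs 0%nat = (2%nat, [(0%nat, 1%nat)]) ->
  (forall i, (i < s)%nat -> (nv (Gs i) <= L)%nat) ->
  (forall i, (1 <= i < s)%nat -> 0 < beta i) ->
  In f (all_pairs n) -> (i < s)%nat ->
  beta i * INR (NGe n (Gs i) X f) / npow n (Gs i) <=
  2 * beta i * INR (length (edges (Gs i))) * rbar L n X ^ (length (edges (Gs i)) - 1).
Proof.
  intros HG HG0 HL Hb Hf Hi.
  assert (Hfp : is_pair n f) by (apply all_pairs_In in Hf; split; lia).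
  assert (Hn : (0 < n)%nat) by (destruct Hfp; lia).
  destruct i as [|i].
  - rewrite HG0, G0_count by auto. unfold npow; simpl. lra.
  - assert (Hbi : 0 < beta (S i)) by (apply Hb; lia).
    pose proof (HG (S i) Hi) as HGi.
    pose proof (npow_pos n (Gs (S i)) Hn) as Hc.
    destruct (edges (Gs (S i))) as [|q [|q' E']] eqn:HE.
    + rewrite NGe_nil by auto. simpl. unfold Rdiv; lra.
    + assert (Hv : (2 <= nv (Gs (S i)))%nat).
      { destruct HGi as [_ HGi]. assert (In q (edges (Gs (S i)))) by (rewrite HE; simpl; auto).
        apply HGi in H. lia. }
      pose proof (one_edge n (Gs (S i)) X f q HGi HE Hfp) as H1.
      rewrite <- npow_nat in H1 by auto. simpl.
      apply Rmult_le_reg_r with (npow n (Gs (S i))); auto.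
      unfold Rdiv. rewrite Rmult_assoc, Rinv_l by lra. nra.
    + assert (Hin : in_HL L (Gs (S i))) by (repeat split; try apply HGi; try apply HL; auto;
        rewrite HE; simpl; lia).
      rewrite (HL_eq L n (Gs (S i)) X f Hin Hn). rewrite HE.
      set (k := length (q :: q' :: E')).
      assert (Hr : rG n (Gs (S i)) X f ^ (k - 1) <= rbar L n X ^ (k - 1)).
      { apply pow_incr. split; [apply rG_nonneg|]. apply rG_le_rbar; auto. }
      assert (0 <= INR k) by apply pos_INR.
      replace (beta (S i) * (2 * INR k * npow n (Gs (S i)) * rG n (Gs (S i)) X f ^ (k - 1)) /
               npow n (Gs (S i))) with (2 * beta (S i) * INR k * rG n (Gs (S i)) X f ^ (k - 1))
        by (field; lra).
      apply Rmult_le_compat_l; auto. nra.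
Qed.

Lemma padd_le s L n Gs beta X f :
  (forall i, (i < s)%nat -> is_graph (Gs i)) ->
  Gs 0%nat = (2%nat, [(0%nat, 1%nat)]) ->
  (forall i, (i < s)%nat -> (nv (Gs i) <= L)%nat) ->
  (forall i, (1 <= i < s)%nat -> 0 < beta i) ->
  In f (all_pairs n) ->
  padd s n Gs beta X f <= phi s Gs beta (rbar L n X).
Proof.
  intros HG HG0 HL Hb Hf. unfold padd, phi. apply logi_mono.
  rewrite Ham_diff. unfold Psi. apply sumR_le; intros i Hi. apply in_seq in Hi.
  apply term_bound with (s := s); auto; lia.
Qed.

Lemma NoDup_remove_pdec b E : NoDup E -> NoDup (remove pdec b E).
Proof.
  induction 1; simpl; [constructor|]. destruct (pdec b x); auto.
  constructor; auto. intro Hin. apply in_remove in Hin as [Hin _]. contradiction.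
Qed.

Lemma Gminus_bound L n G X e b : in_HL L G -> In b (edges G) -> is_pair n e ->
  In e (all_pairs n) ->
  INR (NGe n (nv G, remove pdec b (edges G)) X e) <=
  2 * (INR (length (edges G)) - 1) * npow n G * rbar L n X ^ (length (edges G) - 2).
Proof.
  intros HG Hb Hep He. destruct HG as [[Hnd HE] [HL Hk]].
  assert (Hn : (0 < n)%nat) by (destruct Hep; lia).
  set (Gb := (nv G, remove pdec b (edges G))).
  assert (Hlen : length (edges Gb) = (length (edges G) - 1)%nat) by (apply remove_len; auto).
  assert (HGb : is_graph Gb).
  { split; [apply NoDup_remove_pdec; auto|]. intros p Hp. apply in_remove in Hp as [Hp _].
    apply HE; auto. }
  assert (Hc : npow n Gb = npow n G) by reflexivity.
  pose proof (npow_pos n G Hn).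
  assert (HkR : INR (length (edges G)) - 1 = INR (length (edges Gb))).
  { rewrite Hlen, minus_INR by lia. simpl; lra. }
  rewrite HkR.
  destruct (Nat.eq_dec (length (edges G)) 2) as [H2|H2].
  - rewrite H2. simpl (2 - 2)%nat. rewrite pow_O.
    destruct (edges Gb) as [|q [|q' E']] eqn:HEb; simpl in Hlen; try lia.
    assert (Hv : (2 <= nv G)%nat).
    { destruct HGb as [_ HGb']. assert (In q (edges Gb)) by (rewrite HEb; simpl; auto).
      apply HGb' in H0. simpl in H0. lia. }
    pose proof (one_edge n Gb X e q HGb HEb Hep) as H1.
    change (nv Gb) with (nv G) in H1.
    rewrite <- (npow_nat n G Hv) in H1. simpl length. simpl INR.
    eapply Rle_trans; [exact H1|]. right; ring.
  - assert (HinB : in_HL L Gb) by (split; [exact HGb| split; [simpl; auto| rewrite Hlen; lia]]).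
    rewrite (HL_eq L n Gb X e HinB Hn), Hc.
    replace (length (edges Gb) - 1)%nat with (length (edges G) - 2)%nat by lia.
    assert (rG n Gb X e ^ (length (edges G) - 2) <= rbar L n X ^ (length (edges G) - 2)).
    { apply pow_incr. split; [apply rG_nonneg|]. apply rG_le_rbar; auto. }
    assert (0 <= INR (length (edges Gb))) by apply pos_INR.
    apply Rmult_le_compat_l; [|auto]. nra.
Qed.

Theorem mainTheorem5 :
  forall (s L : nat) (Gs : nat -> graph) (beta : nat -> R),
    (1 <= s)%nat ->
    (forall i, (i < s)%nat -> is_graph (Gs i)) ->
    Gs 0%nat = (2%nat, [(0%nat, 1%nat)]) ->
    (forall i, (i < s)%nat -> (nv (Gs i) <= L)%nat) ->
    (forall i, (1 <= i < s)%nat -> 0 < beta i) ->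
    exists eta : nat -> R,
      Un_cv eta 0 /\
      forall (n : nat) (X : config) (e : nat * nat) (G : graph),
        is_config n X -> is_pair n e -> in_HL L G ->
        glauberE s n Gs beta X
          (fun Y => (INR (NGe n G Y e) - INR (NGe n G X e)) / npow n G)
        <= (1 + eta n) * (2 / binom2R n)
           * INR (length (edges G)) * INR (length (edges G) - 1)
           * (- (rG n G X e) ^ (length (edges G) - 1)
              + phi s Gs beta (rbar L n X) * (rbar L n X) ^ (length (edges G) - 2)).
Proof.
  intros s L Gs beta Hs HG HG0 HL Hb.
  exists (fun _ => 0). split.
  { intros eps Heps. exists 0%nat. intros. unfold R_dist. rewrite Rminus_0_r, Rabs_R0. auto. }
  intros n X e G HX He HGL.
  assert (Hn : (2 <= n)%nat) by (destruct He; lia).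
  assert (Hn0 : (0 < n)%nat) by lia.
  assert (HeAP : In e (all_pairs n)) by (apply all_pairs_In; destruct He; lia).
  pose proof (npow_pos n G Hn0) as Hc.
  assert (HB : 0 < binom2R n).
  { unfold binom2R. assert (2 <= INR n) by (replace 2 with (INR 2) by (simpl; lra); apply le_INR; auto).
    nra. }
  pose proof HGL as [HGg [HGv Hk]].
  set (E := edges G) in *.
  set (k := length E) in *.
  set (c := npow n G) in *.
  set (N := INR (NGe n G X e)).
  set (ph := phi s Gs beta (rbar L n X)).
  set (rb := rbar L n X).
  set (r := rG n G X e).
  set (I := injections (nv G) n).
  set (Rf := fun f => INR (length (filter (Rpred E X e f) I))).
  assert (HRf : forall f, 0 <= Rf f) by (intros; apply pos_INR).
  assert (Hph : 0 < ph).
  { unfold ph, phi. pose proof (exp_pos (Psi s Gs beta (rbar L n X))).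
    apply Rdiv_lt_0_compat; lra. }
  assert (HA : glauberE s n Gs beta X
          (fun Y => (INR (NGe n G Y e) - N) / c) =
      / binom2R n * sumR (map (fun f =>
         / c * (padd s n Gs beta X f * Rf f - ind (X (fst f) (snd f)) * Rf f)) (all_pairs n))).
  { unfold glauberE. f_equal. apply sumR_ext; intros f Hf. cbv beta.
    pose proof (NGe_split n G X e f) as Hsp.
    destruct (X (fst f) (snd f)) eqn:Hx.
    - rewrite (addE_id n X f HX Hx) in *. fold N. fold c.
      assert (INR (NGe n G (remE X f) e) = N - Rf f) by (unfold Rf, N, I, E; lra).
      rewrite H. simpl ind. field. lra.
    - rewrite (remE_id n X f HX Hx) in *. fold N. fold c.
      assert (INR (NGe n G (addE X f) e) = N + Rf f) by (unfold Rf, N, I, E; lra).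
      rewrite H. simpl ind. field. lra. }
  rewrite HA, (sumR_scal (/ c)),
    (sumR_minus (fun f => padd s n Gs beta X f * Rf f) (fun f => ind (X (fst f) (snd f)) * Rf f)).
  assert (HC : sumR (map (fun f => padd s n Gs beta X f * Rf f) (all_pairs n)) <=
               ph * (INR k * (2 * (INR k - 1) * c * rb ^ (k - 2)))).
  { apply Rle_trans with (sumR (map (fun f => ph * Rf f) (all_pairs n))).
    { apply sumR_le; intros f Hf. apply Rmult_le_compat_r; auto.
      apply padd_le; auto. }
    rewrite sumR_scal. apply Rmult_le_compat_l; [lra|].
    apply Rle_trans with (sumR (map (fun b => INR (NGe n (nv G, remove pdec b E) X e)) E)).
    - unfold Rf. rewrite (sumR_ext _ (fun f => sumR (map (fun l => ind (Rpred E X e f l)) I)))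
        by (intros; apply len_filter).
      rewrite sumR_swap.
      rewrite (sumR_ext (fun b => INR (NGe n (nv G, remove pdec b E) X e))
                        (fun b => sumR (map (fun l => ind (QX (remove pdec b E) X e l)) I)))
        by (intros; rewrite NGe_QX; apply len_filter).
      rewrite <- (sumR_swap (fun l b => ind (QX (remove pdec b E) X e l)) I E).
      apply sumR_le; intros l Hl. apply perl_upper; auto.
    - unfold k. rewrite <- sumR_const. apply sumR_le; intros b Hbin.
      apply Gminus_bound; auto. }
  assert (HD : (INR k - 1) * N <=
               sumR (map (fun f => ind (X (fst f) (snd f)) * Rf f) (all_pairs n))).
  { unfold Rf. rewrite (sumR_ext _ (fun f => sumR (map (fun l =>
        ind (X (fst f) (snd f) && Rpred E X e f l)) I))).
    2:{ intros f _. rewrite len_filter, <- sumR_scal. apply sumR_ext; intros; symmetry; apply ind_andb. }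
    rewrite sumR_swap. unfold N. rewrite NGe_QX, len_filter, <- sumR_scal.
    apply sumR_le; intros l Hl.
    destruct (QX (edges G) X e l) eqn:HQ.
    - simpl ind. rewrite Rmult_1_r. apply perl_lower; auto.
    - simpl ind. rewrite Rmult_0_r. apply sumR_nonneg; intros; apply ind_nonneg. }
  assert (HN : N = 2 * INR k * c * r ^ (k - 1)) by (unfold N; apply (HL_eq L); auto).
  assert (HkR : INR (k - 1) = INR k - 1) by (rewrite minus_INR by lia; simpl; lra).
  rewrite HkR.
  assert (Hk2 : 2 <= INR k) by (replace 2 with (INR 2) by (simpl; lra); apply le_INR; auto).
  set (P := sumR (map (fun f => padd s n Gs beta X f * Rf f) (all_pairs n))) in *.
  set (Q := sumR (map (fun f => ind (X (fst f) (snd f)) * Rf f) (all_pairs n))) in *.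
  assert (HPQ : P - Q <= c * (2 * INR k * (INR k - 1) * (- r ^ (k - 1) + ph * rb ^ (k - 2)))).
  { rewrite HN in HD. nra. }
  apply Rle_trans with (/ binom2R n * (2 * INR k * (INR k - 1) * (- r ^ (k - 1) + ph * rb ^ (k - 2)))).
  - apply Rmult_le_compat_l; [left; apply Rinv_0_lt_compat; auto|].
    apply Rmult_le_reg_l with c; auto. rewrite <- Rmult_assoc, Rinv_r, Rmult_1_l by lra. auto.
  - right. field. lra.
Qed.
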